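(* Let $G$ be a graph with no efficient dominating set. Then $|V(G)|\leq\gamma(G)(\Delta(G)+1)-1$. Moreover: (i) Suppose $|V(G)|=\gamma(G)(\Delta(G)+1)-1$. Then (a) for every $\gamma$-set $D$ of $G$ there is exactly one vertex $y_D\in V(G)\setminus D$ such that $D$ is an efficient dominating set of $G-y_D$, and $y_D$ is adjacent to exactly $2$ vertices of $D$; and (b) every vertex belonging to some $\gamma$-set of $G$ has degree $\Delta(G)$. In particular, if every vertex of $G$ belongs to some $\gamma$-set of $G$, then $G$ is regular. (ii) If there exist a $\gamma$-set $D$ of $G$ and a vertex $y\in V(G)\setminus D$ such that $D$ is an efficient dominating set of $G-y$, $y$ is adjacent to exactly $2$ vertices of $D$, and every vertex of $D$ has degree $\Delta(G)$, then $|V(G)|=\gamma(G)(\Delta(G)+1)-1$.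
   Context: All graphs are finite, simple and undirected. For $v\in V(G)$, $N[v]$ is the closed neighborhood of $v$. A set $D\subseteq V(G)$ is dominating if every vertex of $G$ not in $D$ has a neighbor in $D$; $\gamma(G)$ is the minimum size of a dominating set, and a dominating set of size $\gamma(G)$ is a $\gamma$-set. A set $D\subseteq V(H)$ is an efficient dominating set of a graph $H$ if $|N_H[v]\cap D|=1$ for every $v\in V(H)$. $\Delta(G)$ is the maximum degree. *)

(* Defs.v *)
(* A simple graph G is a finite type T of vertices with an
   adjacency relation e : rel T that is symmetric and irreflexive. *)
From mathcomp Require Import all_boot all_order.
Set Implicit Arguments. Unset Strict Implicit. Unset Printing Implicit Defensive.

Section Graphs.
Variables (T : finType) (e : rel T).

Definition oN (v : T) : {set T} := [set u | e v u].
Definition cN (v : T) : {set T} := v |: oN v.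

Definition deg (v : T) : nat := #|oN v|.

Definition Delta : nat := \max_(v : T) deg v.

Definition dominating (D : {set T}) : bool :=
  [forall v, (v \notin D) ==> [exists u in D, e v u]].

(* gamma(G): minimum size of a dominating set (setT is dominating) *)
Definition gamma : nat :=
  #|[arg min_(D < [set: T] | dominating D) #|D|]|.

Definition gamma_set (D : {set T}) : bool := dominating D && (#|D| == gamma).

(* D is an efficient dominating set of the induced subgraph G[S]:
   D is a subset of S and |N_{G[S]}[v] ∩ D| = 1 for all v in S. *)
Definition efficient_dom_on (S D : {set T}) : bool :=
  (D \subset S) && [forall v in S, #|cN v :&: S :&: D| == 1].

Definition efficient_dom (D : {set T}) : bool := efficient_dom_on [set: T] D.

Definition efficient_dom_minus (y : T) (D : {set T}) : bool :=
  efficient_dom_on [set~ y] D.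

End Graphs.

(* Main.v *)
Require Import Defs.
From mathcomp Require Import all_boot all_order.
From mathcomp Require Import zify.
Set Implicit Arguments. Unset Strict Implicit.

Section H.
Variables (T : finType) (e : rel T).
Hypotheses (e_sym : symmetric e) (e_irr : irreflexive e).

Lemma in_cN v d : (d \in cN e v) = (d == v) || e v d.
Proof. by rewrite /cN /oN !inE. Qed.

Lemma cN_sym v d : (d \in cN e v) = (v \in cN e d).
Proof. by rewrite !in_cN eq_sym e_sym. Qed.

Lemma card_cN d : #|cN e d| = (deg e d).+1.
Proof. by rewrite /cN cardsU1 /oN inE e_irr. Qed.

Lemma dcount (D : {set T}) :
  \sum_v #|cN e v :&: D| = \sum_(d in D) (deg e d).+1.
Proof.
transitivity (\sum_v \sum_(d in D) (if v \in cN e d then 1 else 0)).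
  apply: eq_bigr => v _; rewrite -sum1_card big_mkcond [RHS]big_mkcond /=.
  by apply: eq_bigr => d _; rewrite inE [v \in _]cN_sym; case: (d \in cN e v); case: (d \in D).
rewrite exchange_big /=; apply: eq_bigr => d _.
by rewrite -card_cN -sum1_card [RHS]big_mkcond.
Qed.

Lemma dom_pos (D : {set T}) : dominating e D -> forall v, 0 < #|cN e v :&: D|.
Proof.
move=> /forallP dom v; rewrite card_gt0; apply/set0Pn.
case vD: (v \in D); first by exists v; rewrite !inE eqxx vD.
have := dom v; rewrite vD /= => /existsP [u /andP [uD evu]].
by exists u; rewrite !inE uD evu orbT.
Qed.

Lemma sum_split (f : T -> nat) : (forall x, 0 < f x) ->
  \sum_x f x = #|T| + \sum_x (f x - 1).
Proof.
move=> pos; rewrite -sum1_card -big_split /=; apply: eq_bigr => x _.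
have := pos x; lia.
Qed.

Lemma le_two (g : T -> nat) u v : u != v -> g u + g v <= \sum_x g x.
Proof.
move=> uv; rewrite (bigD1 u) //= (bigD1 v) /=; last by rewrite eq_sym.
lia.
Qed.

Lemma le_one (g : T -> nat) u : g u <= \sum_x g x.
Proof. by rewrite (bigD1 u) //= leq_addr. Qed.

Lemma cNoN (D : {set T}) x : x \notin D -> cN e x :&: D = oN e x :&: D.
Proof.
move=> xD; apply/setP => z; rewrite /cN /oN !inE.
by case: (z =P x) => [->|] //=; rewrite (negbTE xD) andbF.
Qed.

Lemma cNminus (D : {set T}) y v : y \notin D -> cN e v :&: [set~ y] :&: D = cN e v :&: D.
Proof.
move=> yD; apply/setP => z; rewrite !inE.
case: (z =P y) => [->|] //=; last by rewrite andbT.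
by rewrite (negbTE yD) !andbF.
Qed.

Lemma deg_le v : deg e v <= Delta e.
Proof. rewrite /Delta; exact: leq_bigmax. Qed.

Lemma sumD_le (D : {set T}) : \sum_(d in D) (deg e d).+1 <= #|D| * (Delta e).+1.
Proof. rewrite -sum_nat_const; apply: leq_sum => d _; exact: deg_le. Qed.

Lemma sumD_deg (D : {set T}) v : v \in D ->
  \sum_(d in D) (deg e d).+1 + (Delta e - deg e v) <= #|D| * (Delta e).+1.
Proof.
move=> vD; rewrite -sum_nat_const (bigD1 v) //= [X in _ <= X](bigD1 v) //=.
have := deg_le v.
have : \sum_(i in D | i != v) (deg e i).+1 <= \sum_(i in D | i != v) (Delta e).+1.
  by apply: leq_sum => d _; exact: deg_le.
lia.
Qed.

Lemma gamma_ex : exists D, gamma_set e D.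
Proof.
rewrite /gamma_set /gamma.
case: arg_minnP => [|D domD _]; last by exists D; rewrite domD eqxx.
by apply/forallP => v; rewrite inE.
Qed.

End H.

Lemma not_eff (T : finType) (e : rel T) (D : {set T}) :
  ~~ efficient_dom e D -> exists v, #|cN e v :&: D| != 1.
Proof.
rewrite /efficient_dom /efficient_dom_on subsetT /= => /forallPn [v].
by rewrite inE /= setIT => H; exists v.
Qed.

Theorem theorem3p9 (T : finType) (e : rel T)
  (e_sym : symmetric e) (e_irr : irreflexive e)
  (noEDS : forall D : {set T}, ~~ efficient_dom e D) :
  #|T| <= gamma e * (Delta e + 1) - 1
  /\ (#|T| = gamma e * (Delta e + 1) - 1 ->
        (forall D : {set T}, gamma_set e D ->
           exists y : T,
             [/\ y \notin D, efficient_dom_minus e y D,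
                 (forall y' : T, y' \notin D -> efficient_dom_minus e y' D -> y' = y)
               & #|oN e y :&: D| = 2])
        /\ (forall v : T, (exists D : {set T}, gamma_set e D /\ v \in D) ->
              deg e v = Delta e)
        /\ ((forall v : T, exists D : {set T}, gamma_set e D /\ v \in D) ->
              forall v : T, deg e v = Delta e))
  /\ ((exists (D : {set T}) (y : T),
         [/\ gamma_set e D, y \notin D, efficient_dom_minus e y D,
             #|oN e y :&: D| = 2
           & forall v : T, v \in D -> deg e v = Delta e]) ->
      #|T| = gamma e * (Delta e + 1) - 1).
Proof.
have key : forall D, gamma_set e D ->
  [/\ forall v, 0 < #|cN e v :&: D|,
      \sum_v #|cN e v :&: D| = #|T| + \sum_v (#|cN e v :&: D| - 1),
      \sum_v #|cN e v :&: D| <= gamma e * (Delta e).+1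
    & exists2 v, #|cN e v :&: D| != 1 & 1 <= #|cN e v :&: D| - 1].
  move=> D /andP [domD /eqP cD].
  have pos := dom_pos domD.
  split => //; first exact: sum_split.
    by rewrite dcount // -cD; exact: sumD_le.
  have [v Hv] := not_eff (noEDS D); exists v => //.
  by have := pos v; move: Hv; lia.
have [D0 gD0] := gamma_ex e.
have P1 : #|T|.+1 <= gamma e * (Delta e).+1.
  have [_ S1 S2 [v _ gv]] := key D0 gD0.
  have := le_one (fun v => #|cN e v :&: D0| - 1) v.
  move: S1 S2 gv => /=; lia.
split; first by move: P1; rewrite addn1; lia.
split.
  move=> Heq.
  have eqS : forall D, gamma_set e D ->
      \sum_v (#|cN e v :&: D| - 1) = 1
      /\ \sum_(d in D) (deg e d).+1 = gamma e * (Delta e).+1.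
    move=> D gD; have [pos S1 S2 [v _ gv]] := key D gD.
    have := le_one (fun v => #|cN e v :&: D| - 1) v.
    move: (gD) => /andP [_ /eqP cD].
    have := dcount e_sym e_irr D.
    move: S1 S2 gv Heq P1 => /=; rewrite addn1; lia.
  have degD : forall v, (exists D : {set T}, gamma_set e D /\ v \in D) ->
      deg e v = Delta e.
    move=> v [D [gD vD]].
    have [_ S2] := eqS D gD.
    have := sumD_deg e vD; have := deg_le e v.
    move: (gD) => /andP [_ /eqP ->]; move: S2; lia.
  split; last by split => // H v; apply: degD.
  move=> D gD.
  have [pos S1 S2 [y Hy gy]] := key D gD.
  have [G1 _] := eqS D gD.
  have c1 : forall u, u != y -> #|cN e u :&: D| = 1.
    move=> u uy; have := le_two (fun v => #|cN e v :&: D| - 1) uy.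
    have := pos u; move: G1 gy => /=; lia.
  have c2 : #|cN e y :&: D| = 2.
    have := le_one (fun v => #|cN e v :&: D| - 1) y; move: G1 gy => /=; lia.
  have yD : y \notin D.
    apply/negP => yD.
    have yin : y \in cN e y :&: D by rewrite /cN !inE eqxx yD.
    have := cardsD1 y (cN e y :&: D); rewrite c2 yin.
    move=> H; have : 0 < #|(cN e y :&: D) :\ y| by move: H; lia.
    rewrite card_gt0 => /set0Pn [d]; rewrite /cN /oN !inE => /andP [dy /andP [/orP [/eqP dy'|eyd] dD]].
      by rewrite dy' eqxx in dy.
    have := c1 d dy.
    have : [set d; y] \subset cN e d :&: D.
      apply/subsetP => z; rewrite !inE => /orP [/eqP ->|/eqP ->].
        by rewrite eqxx dD.
      by rewrite e_sym eyd orbT yD.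
    move/subset_leq_card; rewrite cards2 dy; lia.
  exists y; split => //.
  - rewrite /efficient_dom_minus /efficient_dom_on.
    apply/andP; split.
      by apply/subsetP => z zD; rewrite !inE; apply: contraNneq yD => <-.
    apply/forallP => v; apply/implyP; rewrite !inE => vy.
    by rewrite cNminus // c1.
  - move=> y' y'D /andP [_ /forallP H]; apply/eqP; apply: contraT => yy'.
    have := H y; rewrite !inE eq_sym yy' /= cNminus // c2.
    done.
  - by rewrite -cNoN.
move=> [D [y [gD yD /andP [_ /forallP effm] c2 degD]]].
have [pos S1 S2 _] := key D gD.
have c1 : forall u, u != y -> #|cN e u :&: D| = 1.
  move=> w wy; have := effm w; rewrite !inE wy /= cNminus //; by move/eqP.
have cy : #|cN e y :&: D| = 2 by rewrite cNoN.
have G : \sum_v (#|cN e v :&: D| - 1) = 1.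
  rewrite (bigD1 y) //= big1 ?cy // => u uy; by rewrite c1.
have Sd : \sum_(d in D) (deg e d).+1 = gamma e * (Delta e).+1.
  move: (gD) => /andP [_ /eqP <-]; rewrite -sum_nat_const.
  by apply: eq_bigr => d dD; rewrite degD.
have := dcount e_sym e_irr D; rewrite Sd.
move: S1; rewrite G addn1 => ->; lia.
Qed.
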